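(* Let $d\ge0$ and let $$f=\sum_{i+j\le d}\frac{d!}{i!\,j!\,(d-(i+j))!}\,c_{i,j}\,u_3^{d-(i+j)}u_1^{i}u_2^{j},\qquad c_{i,j}\in\mathbb K[A],$$ be an irreducible contravariant of order $d$ of the ternary form of degree $n$. Then: (i) the vector space $C_d=\langle c_{i,j}: i+j\le d\rangle$ is an irreducible $\mathfrak{sl}_3$-submodule of $\mathbb K[A]$ isomorphic to $\Gamma_{0,d}$; (ii) $c_{0,0}$ is a highest vector of $C_d$, of weight $[0,d]$; (iii) $f=\sum_{i+j\le d}\frac{(-1)^{i+j}}{i!\,j!}\,\hat D_2^{j}\hat D_3^{i}(c_{0,0})\,u_3^{d-(i+j)}u_1^{i}u_2^{j}$.
   Context: $\mathbb K$ is a field of characteristic $0$, $n\ge1$, $\mathbb K[A]=\mathbb K[a_{i,j}: i,j\ge0,\ i+j\le n]$ is the coordinate ring of the space of ternary forms $\sum_{i+j\le n}\frac{n!}{i!j!(n-i-j)!}a_{i,j}x_1^{n-i-j}x_2^ix_3^j$. $\mathfrak{sl}_3$ acts by derivations on $\mathbb K[A,u_1,u_2,u_3]$; the operators for $E_{12},E_{23},E_{13},E_{21},E_{32},E_{31},E_{11}-E_{22},E_{22}-E_{33}$ are $D_1,D_2,D_3,\hat D_1,\hat D_2,\hat D_3,E_1,E_2$. On generators of $\mathbb K[A]$ (with $a_{i,j}=0$ if an index is negative or $i+j>n$): $D_1(a_{i,j})=i a_{i-1,j}$, $D_2(a_{i,j})=j a_{i+1,j-1}$, $D_3(a_{i,j})=j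 a_{i,j-1}$, $\hat D_1(a_{i,j})=(n-i-j)a_{i+1,j}$, $\hat D_2(a_{i,j})=i a_{i-1,j+1}$, $\hat D_3(a_{i,j})=(n-i-j)a_{i,j+1}$, $E_1(a_{i,j})=(n-2i-j)a_{i,j}$, $E_2(a_{i,j})=(i-j)a_{i,j}$. The variables $u_1,u_2,u_3$ span the dual of the standard module $\langle x_1,x_2,x_3\rangle$ (on which $D_1=-x_2\partial_{x_1}$, $D_2=-x_3\partial_{x_2}$, $D_3=-x_3\partial_{x_1}$, $\hat D_1=-x_1\partial_{x_2}$, $\hat D_2=-x_2\partial_{x_3}$, $\hat D_3=-x_1\partial_{x_3}$), so that $x_1u_1+x_2u_2+x_3u_3$ is invariant; explicitly $D_1=u_1\partial_{u_2}$, $D_2=u_2\partial_{u_3}$, $D_3=u_1\partial_{u_3}$, $\hat D_1=u_2\partial_{u_1}$, $\hat D_2=u_3\partial_{u_2}$, $\hat D_3=u_3\partial_{u_1}$, $E_1=u_1\partial_{u_1}-u_2\partial_{u_2}$, $E_2=u_2\partial_{u_2}-u_3\partial_{u_3}$ on the $u$'s. A contravariant of order $d$ is an element of $\mathbb K[A,u_1,u_2,u_3]$ homogeneous of degree $d$ in the $u$'s and $SL_3$-invariant (equivalently annihilated by all these derivations); ''irreducible'' is used in the classical sense (nonzero, not a polynomial in contravariants of smaller degree). $\Gamma_{m_1,m_2}$ denotes the irreducible finite-dimensional $\mathfrak{sl}_3$-module of highest weight $[m_1,m_2]$, i.e. generated by a nonzero vector $v$ (a highest vector) with $D_1v=D_2v=D_3v=0$,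 $E_1v=m_1v$, $E_2v=m_2v$. *)

(* Defs.v *)
From HB Require Import structures.
From mathcomp Require Import all_boot all_order all_algebra.
From mathcomp Require Import mpoly.
Set Implicit Arguments. Unset Strict Implicit. Unset Printing Implicit Defensive.
Import Order.TTheory GRing.Theory Num.Theory.
Local Open Scope ring_scope.

Section Ternary.
Variables (K : fieldType) (n : nat).

(* index set of the coefficients a_{i,j}, i + j <= n *)
Definition AIdx := {p : 'I_n.+1 * 'I_n.+1 | (p.1 + p.2 <= n)%N}.
Definition NA := #|{: AIdx}|.

(* K[A] = polynomial ring in the a_{i,j} (variable k <-> enum_val k) *)
Definition KA := {mpoly K[NA]}.

(* a_{i,j}, equal to 0 if i + j > n (negative indices never arise:
   they only occur with a zero factor, and nat subtraction truncates) *)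
Definition avar (i j : nat) : KA :=
  if insub (inord i : 'I_n.+1, inord j : 'I_n.+1) : option AIdx is Some t
  then if (i + j <= n)%N then 'X_(enum_rank t) else 0
  else 0.

Definition idx_i (k : 'I_NA) : nat := (val (enum_val k)).1.
Definition idx_j (k : 'I_NA) : nat := (val (enum_val k)).2.

Definition derA (g : 'I_NA -> KA) (p : KA) : KA :=
  \sum_(k < NA) mderiv k p * g k.

Definition gD1  (k : 'I_NA) : KA := let i := idx_i k in let j := idx_j k in
  i%:R * avar i.-1 j.
Definition gD2  (k : 'I_NA) : KA := let i := idx_i k in let j := idx_j k in
  j%:R * avar i.+1 j.-1.
Definition gD3  (k : 'I_NA) : KA := let i := idx_i k in let j := idx_j k in
  j%:R * avar i j.-1.
Definition ghD1 (k : 'I_NA) : KA := let i := idx_i k in let j := idx_j k in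
  (n - i - j)%N%:R * avar i.+1 j.
Definition ghD2 (k : 'I_NA) : KA := let i := idx_i k in let j := idx_j k in
  i%:R * avar i.-1 j.+1.
Definition ghD3 (k : 'I_NA) : KA := let i := idx_i k in let j := idx_j k in
  (n - i - j)%N%:R * avar i j.+1.
Definition gE1  (k : 'I_NA) : KA := let i := idx_i k in let j := idx_j k in
  ((n%:Z - 2 * i%:Z - j%:Z)%:~R) * avar i j.
Definition gE2  (k : 'I_NA) : KA := let i := idx_i k in let j := idx_j k in
  ((i%:Z - j%:Z)%:~R) * avar i j.

Definition D1A  := derA gD1.
Definition D2A  := derA gD2.
Definition D3A  := derA gD3.
Definition hD1A := derA ghD1.
Definition hD2A := derA ghD2.
Definition hD3A := derA ghD3.
Definition E1A  := derA gE1.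
Definition E2A  := derA gE2.

(* K[A,u1,u2,u3] = K[A][u1,u2,u3]; u1 = 'X_0, u2 = 'X_1, u3 = 'X_2 *)
Definition KAu := {mpoly KA[3]}.
Definition u1 : KAu := 'X_(0 : 'I_3).
Definition u2 : KAu := 'X_(1 : 'I_3).
Definition u3 : KAu := 'X_(2 : 'I_3).

Definition derAu (DA : KA -> KA) (gu : 'I_3 -> KAu) (p : KAu) : KAu :=
  map_mpoly DA p + \sum_(k < 3) mderiv k p * gu k.

Definition vec3 (a b c : KAu) : 'I_3 -> KAu :=
  fun k => if val k == 0%N then a else if val k == 1%N then b else c.

Definition D1  := derAu D1A  (vec3 0 u1 0).           (* u1 d/du2 *)
Definition D2  := derAu D2A  (vec3 0 0 u2).           (* u2 d/du3 *)
Definition D3  := derAu D3A  (vec3 0 0 u1).           (* u1 d/du3 *)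
Definition hD1 := derAu hD1A (vec3 u2 0 0).           (* u2 d/du1 *)
Definition hD2 := derAu hD2A (vec3 0 u3 0).           (* u3 d/du2 *)
Definition hD3 := derAu hD3A (vec3 u3 0 0).           (* u3 d/du1 *)
Definition E1  := derAu E1A  (vec3 u1 (- u2) 0).      (* u1 d/du1 - u2 d/du2 *)
Definition E2  := derAu E2A  (vec3 0 u2 (- u3)).      (* u2 d/du2 - u3 d/du3 *)

Definition contravariant (d : nat) (f : KAu) : Prop :=
  f \is d.-homog /\
  D1 f = 0 /\ D2 f = 0 /\ D3 f = 0 /\ hD1 f = 0 /\ hD2 f = 0 /\ hD3 f = 0 /\
  E1 f = 0 /\ E2 f = 0.

(* degree in the coefficients a_{i,j} (shifted by one; 0 for f = 0) *)
Definition degA (f : KAu) : nat := \max_(m <- msupp f) msize (f@_m).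

Inductive in_alg (S : KAu -> Prop) : KAu -> Prop :=
| in_alg_gen g : S g -> in_alg S g
| in_alg_const (c : K) : in_alg S ((c%:MP : KA)%:MP)
| in_alg_add p q : in_alg S p -> in_alg S q -> in_alg S (p + q)
| in_alg_mul p q : in_alg S p -> in_alg S q -> in_alg S (p * q).

Definition irreducible_contravariant (d : nat) (f : KAu) : Prop :=
  contravariant d f /\ f != 0 /\
  ~ in_alg (fun g => (exists e, contravariant e g) /\ (degA g < degA f)%N) f.

Definition sl3_submodule (W : KA -> Prop) : Prop :=
  W 0 /\ (forall p q, W p -> W q -> W (p + q)) /\
  (forall (a : K) p, W p -> W (a *: p)) /\
  (forall p, W p -> W (D1A p) /\ W (D2A p) /\ W (D3A p) /\ W (hD1A p) /\
                        W (hD2A p) /\ W (hD3A p) /\ W (E1A p) /\ W (E2A p)).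

Definition irreducible_submodule (M : KA -> Prop) : Prop :=
  sl3_submodule M /\ (exists p, M p /\ p != 0) /\
  (forall W : KA -> Prop, sl3_submodule W -> (forall p, W p -> M p) ->
     (exists p, W p /\ p != 0) -> forall p, M p -> W p).

Definition highest_vector (v : KA) (m1 m2 : nat) : Prop :=
  v != 0 /\ D1A v = 0 /\ D2A v = 0 /\ D3A v = 0 /\
  E1A v = m1%:R *: v /\ E2A v = m2%:R *: v.

(* M is an irreducible sl3-module isomorphic to Gamma_{m1,m2}, i.e. an
   irreducible module generated by a highest vector of weight [m1,m2]
   (generation is automatic by irreducibility) *)
Definition iso_Gamma (M : KA -> Prop) (m1 m2 : nat) : Prop :=
  irreducible_submodule M /\ exists v, M v /\ highest_vector v m1 m2.

Definition span_coeffs (d : nat) (c : nat -> nat -> KA) (p : KA) : Prop :=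
  exists lam : nat -> nat -> K,
    p = \sum_(i < d.+1) \sum_(j < d.+1 | (i + j <= d)%N) lam i j *: c i j.

End Ternary.

(* Main.v *)
Require Import Defs.
From HB Require Import structures.
From mathcomp Require Import all_boot all_order all_algebra.
From mathcomp Require Import mpoly.
From mathcomp Require Import zify ring.
Import Order.TTheory GRing.Theory Num.Theory.
Local Open Scope ring_scope.
Set Implicit Arguments. Unset Strict Implicit.

Definition mon (i j k : nat) : 'X_{1..3} :=
  [multinom (nth 0%N [:: i; j; k] t) | t < 3].

Lemma monE i j k (t : 'I_3) : mon i j k t = nth 0%N [:: i; j; k] t.
Proof. by rewrite /mon mnmE. Qed.

Lemma eq_mon i j k i' j' k' :
  (mon i j k == mon i' j' k') = [&& i == i', j == j' & k == k'].
Proof.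
apply/eqP/idP.
  move/mnmP=> H.
  have := H 0; have := H 1; have := H 2; rewrite !monE /= => -> -> ->.
  by rewrite !eqxx.
by case/and3P=> /eqP-> /eqP-> /eqP->.
Qed.

Section Gen.
Variable (R : ringType).

Lemma Xmon i j k : ('X_(2 : 'I_3) : {mpoly R[3]}) ^+ k * 'X_(0 : 'I_3) ^+ i
   * 'X_(1 : 'I_3) ^+ j = 'X_[mon i j k].
Proof.
rewrite !mpolyXn -!mpolyXD; congr mpolyX; apply/mnmP => t.
rewrite !mnmDE !mulmnE !mnm1E monE.
by case: t => [[|[|[|]]] ?] //=; rewrite ?mul0n ?mul1n ?add0n ?addn0.
Qed.

Lemma coefMX (p : {mpoly R[3]}) (b : 'I_3) m :
  (p * 'X_b)@_m = if (0 < m b)%N then p@_(m - U_(b))%MM else 0.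
Proof.
case: ifP => hb.
  have le : (U_(b) <= m)%MM by rewrite lep1mP -lt0n.
  by rewrite -{1}(submK le) addmC mcoeffMX.
rewrite mcoeffM big1 // => k /eqP hk.
rewrite mcoeffX; case: eqP => [e|]; last by rewrite mulr0.
exfalso; move: hb; rewrite hk mnmDE -e mnm1E eqxx addn1 //.
Qed.

Lemma coefMdX (p : {mpoly R[3]}) (a b : 'I_3) m :
  (mderiv a p * 'X_b)@_m = if (0 < m b)%N then p@_(m - U_(b) + U_(a))%MM *+ ((m - U_(b))%MM a).+1 else 0.
Proof. by rewrite coefMX mcoeff_mderiv. Qed.

Lemma coefMdX_same (p : {mpoly R[3]}) (a : 'I_3) m :
  (mderiv a p * 'X_a)@_m = p@_m *+ m a.
Proof.
rewrite coefMdX; case: ifP => h.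
  have le : (U_(a) <= m)%MM by rewrite lep1mP -lt0n.
  rewrite submK // mnmBE mnm1E eqxx subn1 prednK //.
by move/negbT: h; rewrite -leqNgt leqn0 => /eqP ->.
Qed.

Lemma sum3 (V : zmodType) (F : 'I_3 -> V) :
  \sum_(t < 3) F t = F 0 + F 1 + F 2.
Proof. rewrite !big_ord_recr big_ord0 /= add0r.
by congr (F _ + F _ + F _); apply: val_inj. Qed.

End Gen.

Section KN.
Variables (K : fieldType) (n : nat).
Local Notation KA := (KA K n).
Local Notation KAu := (KAu K n).

Lemma derAD (g : 'I_(NA n) -> KA) p q : derA g (p + q) = derA g p + derA g q.
Proof. by rewrite /derA -big_split /=; apply: eq_bigr => k _; rewrite mderivD mulrDl. Qed.

Lemma derAZ (g : 'I_(NA n) -> KA) a p : derA g (a *: p) = a *: derA g p.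
Proof. by rewrite /derA scaler_sumr; apply: eq_bigr => k _; rewrite mderivZ scalerAl. Qed.

Lemma derA0 (g : 'I_(NA n) -> KA) : derA g 0 = 0.
Proof. by have := derAZ g 0 0; rewrite !scale0r. Qed.

Lemma derA_is_additive (g : 'I_(NA n) -> KA) : additive (derA g).
Proof. by move=> p q; rewrite derAD -scaleN1r derAZ scaleN1r. Qed.

Definition derA_add g : {additive KA -> KA} :=
  HB.pack (derA g) (GRing.isAdditive.Build _ _ (derA g) (derA_is_additive g)).

Lemma coef_derAu g gu (p : KAu) m :
  (derAu (derA g) gu p)@_m = derA g p@_m + \sum_(t < 3) (mderiv t p * gu t)@_m.
Proof.
rewrite /derAu mcoeffD; congr (_ + _); last by rewrite raddf_sum.
exact: (mcoeff_map_mpoly (derA_add g) m p).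
Qed.

Lemma derA_sum g I (r : seq I) P (F : I -> KA) :
  derA g (\sum_(i <- r | P i) F i) = \sum_(i <- r | P i) derA g (F i).
Proof. exact: (raddf_sum (derA_add g)). Qed.

End KN.

Lemma dsum1 (V : zmodType) d (F : nat -> nat -> V) i0 j0 :
  \sum_(i < d.+1) \sum_(j < d.+1 | (i + j <= d)%N)
     (if (i == i0 :> nat) && (j == j0 :> nat) then F i j else 0)
  = if (i0 + j0 <= d)%N then F i0 j0 else 0.
Proof.
transitivity (\sum_(i < d.+1 | i == i0 :> nat)
   \sum_(j < d.+1 | (i + j <= d)%N && (j == j0 :> nat)) F i j).
  rewrite [RHS]big_mkcond /=; apply: eq_bigr => i _.
  case: eqP => hi /=; last by rewrite big1 // => j _; rewrite andbF.
  by rewrite [RHS]big_mkcondr /=.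
rewrite (big_ord1_eq _ (fun i : nat => \sum_(j < d.+1 | (i + j <= d)%N && (j == j0 :> nat)) F i j)).

rewrite (big_ord1_cond_eq _ (F i0) (fun j => i0 + j <= d)%N).
case: (leqP (i0 + j0) d) => h.
  have -> : (i0 < d.+1)%N by lia.
  by have -> : (j0 < d.+1)%N by lia.
case: ifP => // _; case: ifP => //; lia.
Qed.

Section Main.
Variables (K : fieldType) (n d : nat) (f : KAu K n) (c : nat -> nat -> KA K n).
Hypothesis hchar : [pchar K] =i pred0.
Hypothesis hcontra : contravariant d f.
Hypothesis hf : f = \sum_(i < d.+1) \sum_(j < d.+1 | (i + j <= d)%N)
        (((d`! %/ (i`! * j`! * (d - (i + j))`!))%:R *: c i j)%:MP
          * (u3 K n ^+ (d - (i + j)) * u1 K n ^+ i * u2 K n ^+ j)).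

Definition Mk i j : K := (d`! %/ (i`! * j`! * (d - (i + j))`!))%:R.
Definition C i j : KA K n := Mk i j *: c i j.

Lemma natf_neq0 m : (0 < m)%N -> (m%:R : K) != 0.
Proof. by move=> h; rewrite ((pcharf0P K).1 hchar) -lt0n. Qed.

Lemma fact_neq0 m : (m`!%:R : K) != 0.
Proof. exact/natf_neq0/fact_gt0. Qed.

Lemma MkE i j : (i + j <= d)%N ->
  Mk i j = d`!%:R / (i`!%:R * j`!%:R * (d - (i + j))`!%:R).
Proof.
move=> h; rewrite /Mk natr_div ?natrM //.
  apply/dvdnP; exists ('C(d, i) * 'C(d - i, j))%N.
  rewrite -(bin_fact (_ : i <= d)%N); last by lia.
  rewrite -(bin_fact (_ : j <= d - i)%N); last by lia.
  rewrite subnDA; ring.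
by rewrite unitfE ?natrM !mulf_neq0 // fact_neq0.
Qed.

Lemma Mk_neq0 i j : (i + j <= d)%N -> Mk i j != 0.
Proof.
move=> h; rewrite MkE //; apply: mulf_neq0; first exact: fact_neq0.
by rewrite invr_eq0; apply/mulf_neq0; [apply/mulf_neq0|]; exact: fact_neq0.
Qed.

Lemma coef_f i j k :
  f@_(mon i j k) = if (i + j + k == d)%N then C i j else 0.
Proof.
rewrite hf /u1 /u2 /u3 raddf_sum.
under eq_bigr do rewrite raddf_sum.
under eq_bigr do under eq_bigr do rewrite Xmon /= mcoeffCM mcoeffX eq_mon.
rewrite (eq_bigr (fun i0 : 'I_d.+1 => \sum_(j0 < d.+1 | (i0 + j0 <= d)%N)
   (if (i0 == i :> nat) && (j0 == j :> nat) then C i0 j0 * ((d - (i0 + j0))%N == k)%:R else 0))); last first.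
  move=> i0 _; apply: eq_bigr => j0 _.
  by case: eqP; case: eqP => //=; rewrite mulr0.
rewrite (dsum1 _ (fun a b => C a b * ((d - (a + b))%N == k)%:R)).
case: (leqP (i + j) d) => h.
  case: eqP => e; case: eqP => e'; rewrite ?mulr1 ?mulr0 //; lia.
by case: eqP => //; lia.
Qed.


Lemma natf_inj a b : (a%:R : K) = b%:R -> a = b.
Proof.
move=> e.
have h1 : ((a - b)%N%:R : K) == 0.
  case: (leqP a b) => h; first by rewrite (eqnP h).
  by rewrite natrB ?e ?subrr // ltnW.
have h2 : ((b - a)%N%:R : K) == 0.
  case: (leqP b a) => h; first by rewrite (eqnP h).
  by rewrite natrB ?e ?subrr // ltnW.
move: h1 h2; rewrite !((pcharf0P K).1 hchar); lia.
Qed.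

Lemma r1 i j k : (i + j + k.+1 = d)%N -> Mk i.+1 j * i.+1%:R = Mk i j * k.+1%:R.
Proof.
move=> h; rewrite !MkE; try lia.
have -> : (d - (i.+1 + j) = k)%N by lia.
have -> : (d - (i + j) = k.+1)%N by lia.
rewrite !factS !natrM; field.
by rewrite !fact_neq0 ![1 + _]addrC !natr1 !natf_neq0.
Qed.

Lemma r2 i j k : (i + j + k.+1 = d)%N -> Mk i j.+1 * j.+1%:R = Mk i j * k.+1%:R.
Proof.
move=> h; rewrite !MkE; try lia.
have -> : (d - (i + j.+1) = k)%N by lia.
have -> : (d - (i + j) = k.+1)%N by lia.
rewrite !factS !natrM; field.
by rewrite !fact_neq0 ![1 + _]addrC !natr1 !natf_neq0.
Qed.

Lemma single g gu (a b : 'I_3) m :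
  (forall t, gu t = if t == a then 'X_b else 0) -> derAu (derA g) gu f = 0 ->
  derA g (f@_m) + (mderiv a f * 'X_b)@_m = 0.
Proof.
move=> hgu h; have := congr1 (mcoeff m) h; rewrite coef_derAu mcoeff0.
rewrite (bigD1 a) //= big1 ?addr0; first by rewrite hgu eqxx.
by move=> t /negbTE ht; rewrite hgu ht mulr0 mcoeff0.
Qed.

Lemma two g gu (a b a' b' : 'I_3) m :
  a != a' ->
  (forall t, gu t = if t == a then 'X_b else if t == a' then - 'X_b' else 0) ->
  derAu (derA g) gu f = 0 ->
  derA g (f@_m) + (mderiv a f * 'X_b)@_m - (mderiv a' f * 'X_b')@_m = 0.
Proof.
move=> ha hgu h; have := congr1 (mcoeff m) h; rewrite coef_derAu mcoeff0.
rewrite (bigD1 a) //= (bigD1 a') /=; last by rewrite eq_sym.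
rewrite big1 ?addr0; last first.
  by move=> t /andP [h1 h2]; rewrite hgu (negbTE h1) (negbTE h2) mulr0 mcoeff0.
rewrite !hgu eqxx eq_sym (negbTE ha) eqxx mulrN mcoeffN addrA.
by [].
Qed.

Lemma fin_rel i j (O : KA K n -> KA K n) (s : K) (x : KA K n) :
  (i + j <= d)%N ->
  Mk i j *: O (c i j) + Mk i j *: (s *: x) = 0 -> O (c i j) = - s *: x.
Proof.
move=> h e; apply/eqP; rewrite scaleNr -subr_eq0 opprK.
by move: e; rewrite -scalerDr => /eqP; rewrite scaler_eq0 (negbTE (Mk_neq0 h)).
Qed.

Ltac mon_tac := apply/mnmP; case => [[|[|[|?]]] ?];
  rewrite !(mnmDE, mnmBE, mnm1E, monE) //=; try lia.

Lemma hi_ok i j : (i + j <= d)%N -> (i + j + (d - (i + j)) == d)%N.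
Proof. move=> h; apply/eqP; lia. Qed.

Lemma rel_hD3 i j : (i + j <= d)%N -> hD3A (c i j) = - (d - (i + j))%:R *: c i.+1 j.
Proof.
move=> h; have [_ [_ [_ [_ [_ [_ [H _]]]]]]] := hcontra.
have e := @single (@ghD3 K n) (vec3 (u3 K n) 0 0) 0 2 (mon i j (d - (i + j)))
  ltac:(by case => [[|[|[|t]]] ?]) H.
move: e; rewrite coefMdX monE /= coef_f hi_ok // /C derAZ.
move=> e; apply: (fin_rel h); move: e.
case hk: (d - (i + j))%N => [|k] /=; first by rewrite scale0r scaler0 addr0.
have -> : (mon i j k.+1 - U_(2%R : 'I_3) + U_(0%R : 'I_3))%MM = mon i.+1 j k by mon_tac.
have -> : (mon i j k.+1 - U_(2%R : 'I_3))%MM (0%R : 'I_3) = i by rewrite mnmBE mnm1E monE /=; try lia.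
rewrite coef_f (_ : (i.+1 + j + k == d)%N); last by apply/eqP; lia.
rewrite /C.
have -> : (Mk i.+1 j *: c i.+1 j) *+ i.+1 = Mk i j *: (k.+1%:R *: c i.+1 j).
  by rewrite -scaler_nat !scalerA mulrC (@r1 i j k) //; lia.
done.
Qed.

Ltac start g gu a b m H h :=
  let E := fresh "E" in
  generalize (@single g gu a b m ltac:(by case => [[|[|[|t]]] ?]) H);
  rewrite coefMdX monE /= coef_f hi_ok // /C derAZ; intro E;
  apply: (fin_rel h); revert E.

Lemma rel_hD2 i j : (i + j <= d)%N -> hD2A (c i j) = - (d - (i + j))%:R *: c i j.+1.
Proof.
move=> h; have [_ [_ [_ [_ [_ [H _]]]]]] := hcontra.
start (@ghD2 K n) (vec3 0 (u3 K n) 0) (1 : 'I_3) (2 : 'I_3) (mon i j (d - (i + j))) H h.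
case hk: (d - (i + j))%N => [|k] /=; first by rewrite scale0r scaler0 addr0.
have -> : (mon i j k.+1 - U_(2%R : 'I_3) + U_(1%R : 'I_3))%MM = mon i j.+1 k by mon_tac.
have -> : (mon i j k.+1 - U_(2%R : 'I_3))%MM (1%R : 'I_3) = j by rewrite mnmBE mnm1E monE /=; try lia.
rewrite coef_f (_ : (i + j.+1 + k == d)%N); last by apply/eqP; lia.
rewrite /C.
have -> : (Mk i j.+1 *: c i j.+1) *+ j.+1 = Mk i j *: (k.+1%:R *: c i j.+1).
  by rewrite -scaler_nat !scalerA mulrC (@r2 i j k) //; lia.
done.
Qed.

Lemma rel_D1 i j : (i + j <= d)%N -> D1A (c i j) = - i%:R *: c i.-1 j.+1.
Proof.
move=> h; have [_ [H _]] := hcontra.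
start (@gD1 K n) (vec3 0 (u1 K n) 0) (1 : 'I_3) (0 : 'I_3) (mon i j (d - (i + j))) H h.
case: i h => [|i] h /=; first by rewrite scale0r scaler0 addr0.
set k := (d - (i.+1 + j))%N.
have -> : (mon i.+1 j k - U_(0%R : 'I_3) + U_(1%R : 'I_3))%MM = mon i j.+1 k by mon_tac.
have -> : (mon i.+1 j k - U_(0%R : 'I_3))%MM (1%R : 'I_3) = j by rewrite mnmBE mnm1E monE /=; try lia.
rewrite coef_f (_ : (i + j.+1 + k == d)%N); last by apply/eqP; lia.
rewrite /C.
have -> : (Mk i j.+1 *: c i j.+1) *+ j.+1 = Mk i.+1 j *: (i.+1%:R *: c i j.+1).
  rewrite -scaler_nat !scalerA mulrC (@r2 i j k); last by lia.
  by rewrite (@r1 i j k) //; lia.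
done.
Qed.

Lemma rel_D2 i j : (i + j <= d)%N -> D2A (c i j) = - j%:R *: c i j.-1.
Proof.
move=> h; have [_ [_ [H _]]] := hcontra.
start (@gD2 K n) (vec3 0 0 (u2 K n)) (2 : 'I_3) (1 : 'I_3) (mon i j (d - (i + j))) H h.
case: j h => [|j] h /=; first by rewrite scale0r scaler0 addr0.
set k := (d - (i + j.+1))%N.
have -> : (mon i j.+1 k - U_(1%R : 'I_3) + U_(2%R : 'I_3))%MM = mon i j k.+1 by mon_tac.
have -> : (mon i j.+1 k - U_(1%R : 'I_3))%MM (2%R : 'I_3) = k by rewrite mnmBE mnm1E monE /=; try lia.
rewrite coef_f (_ : (i + j + k.+1 == d)%N); last by apply/eqP; lia.
rewrite /C.
have -> : (Mk i j *: c i j) *+ k.+1 = Mk i j.+1 *: (j.+1%:R *: c i j).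
  by rewrite -scaler_nat !scalerA mulrC (@r2 i j k) //; lia.
done.
Qed.

Lemma rel_D3 i j : (i + j <= d)%N -> D3A (c i j) = - i%:R *: c i.-1 j.
Proof.
move=> h; have [_ [_ [_ [H _]]]] := hcontra.
start (@gD3 K n) (vec3 0 0 (u1 K n)) (2 : 'I_3) (0 : 'I_3) (mon i j (d - (i + j))) H h.
case: i h => [|i] h /=; first by rewrite scale0r scaler0 addr0.
set k := (d - (i.+1 + j))%N.
have -> : (mon i.+1 j k - U_(0%R : 'I_3) + U_(2%R : 'I_3))%MM = mon i j k.+1 by mon_tac.
have -> : (mon i.+1 j k - U_(0%R : 'I_3))%MM (2%R : 'I_3) = k by rewrite mnmBE mnm1E monE /=; try lia.
rewrite coef_f (_ : (i + j + k.+1 == d)%N); last by apply/eqP; lia.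
rewrite /C.
have -> : (Mk i j *: c i j) *+ k.+1 = Mk i.+1 j *: (i.+1%:R *: c i j).
  by rewrite -scaler_nat !scalerA mulrC (@r1 i j k) //; lia.
done.
Qed.

Lemma rel_hD1 i j : (i + j <= d)%N -> hD1A (c i j) = - j%:R *: c i.+1 j.-1.
Proof.
move=> h; have [_ [_ [_ [_ [H _]]]]] := hcontra.
start (@ghD1 K n) (vec3 (u2 K n) 0 0) (0 : 'I_3) (1 : 'I_3) (mon i j (d - (i + j))) H h.
case: j h => [|j] h /=; first by rewrite scale0r scaler0 addr0.
set k := (d - (i + j.+1))%N.
have -> : (mon i j.+1 k - U_(1%R : 'I_3) + U_(0%R : 'I_3))%MM = mon i.+1 j k by mon_tac.
have -> : (mon i j.+1 k - U_(1%R : 'I_3))%MM (0%R : 'I_3) = i by rewrite mnmBE mnm1E monE /=; try lia.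
rewrite coef_f (_ : (i.+1 + j + k == d)%N); last by apply/eqP; lia.
rewrite /C.
have -> : (Mk i.+1 j *: c i.+1 j) *+ i.+1 = Mk i j.+1 *: (j.+1%:R *: c i.+1 j).
  rewrite -scaler_nat !scalerA mulrC (@r1 i j k); last by lia.
  by rewrite (@r2 i j k) //; lia.
done.
Qed.

Lemma rel_E1 i j : (i + j <= d)%N -> E1A (c i j) = (j%:R - i%:R) *: c i j.
Proof.
move=> h; have [_ [_ [_ [_ [_ [_ [_ [H _]]]]]]]] := hcontra.
have e := @two (@gE1 K n) (vec3 (u1 K n) (- u2 K n) 0) 0 0 1 1 (mon i j (d - (i + j)))
  isT ltac:(by case => [[|[|[|t]]] ?]) H.
move: e; rewrite !coefMdX_same !monE /= coef_f hi_ok // /C derAZ => e.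
rewrite -opprB; apply: (fin_rel h); rewrite -e -addrA; congr (_ + _).
by rewrite scalerA mulrC -scalerA scalerBl !scaler_nat.
Qed.

Lemma rel_E2 i j : (i + j <= d)%N -> E2A (c i j) = ((d - (i + j))%:R - j%:R) *: c i j.
Proof.
move=> h; have [_ [_ [_ [_ [_ [_ [_ [_ H]]]]]]]] := hcontra.
have e := @two (@gE2 K n) (vec3 0 (u2 K n) (- u3 K n)) 1 1 2 2 (mon i j (d - (i + j)))
  isT ltac:(by case => [[|[|[|t]]] ?]) H.
move: e; rewrite !coefMdX_same !monE /= coef_f hi_ok // /C derAZ => e.
rewrite -opprB; apply: (fin_rel h); rewrite -e -addrA; congr (_ + _).
by rewrite scalerA mulrC -scalerA scalerBl !scaler_nat.
Qed.

Lemma iterZ (g : 'I_(NA n) -> KA K n) j (a : K) x : iter j (derA g) (a *: x) = a *: iter j (derA g) x.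
Proof. by elim: j => //= j ->; rewrite derAZ. Qed.

Lemma iter0 (g : 'I_(NA n) -> KA K n) j : iter j (derA g) 0 = 0.
Proof. by elim: j => //= j ->; rewrite derA0. Qed.

Lemma iter3 i : (i <= d)%N ->
  iter i (@hD3A K n) (c 0 0) = ((-1) ^+ i * (d`!%:R / (d - i)`!%:R)) *: c i 0.
Proof.
elim: i => [|i IH] h.
  by rewrite /= subn0 divff ?fact_neq0 // mulr1 expr0 scale1r.
rewrite iterS IH; last by lia.
rewrite /hD3A derAZ -/(hD3A (c i 0)) rel_hD3 ?addn0; last by lia.
rewrite scalerA; congr (_ *: _).
have -> : (d - i = (d - i.+1).+1)%N by lia.
rewrite factS natrM exprS; field.
by rewrite fact_neq0 addrC natr1 natf_neq0.
Qed.

Lemma iter2 i j : (i + j <= d)%N ->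
  iter j (@hD2A K n) (c i 0) = ((-1) ^+ j * ((d - i)`!%:R / (d - (i + j))`!%:R)) *: c i j.
Proof.
elim: j => [|j IH] h.
  by rewrite /= addn0 divff ?fact_neq0 // mulr1 expr0 scale1r.
rewrite iterS IH; last by lia.
rewrite /hD2A derAZ -/(hD2A (c i j)) rel_hD2; last by lia.
rewrite scalerA; congr (_ *: _).
have -> : (d - (i + j) = (d - (i + j.+1)).+1)%N by lia.
rewrite factS natrM exprS; field.
by rewrite fact_neq0 addrC natr1 natf_neq0.
Qed.

Lemma formula i j : (i + j <= d)%N ->
  ((-1) ^+ (i + j) / (i`!%:R * j`!%:R) : K)
     *: iter j (@hD2A K n) (iter i (@hD3A K n) (c 0 0)) = C i j.
Proof.
move=> h; rewrite iter3; last by lia.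
rewrite [iter j _ _]iterZ iter2 // !scalerA /C; congr (_ *: _).
rewrite MkE // exprD -!(signr_odd _ i) -!(signr_odd _ j).
case: (odd i); case: (odd j); rewrite /= ?expr0 ?expr1; field;
  by rewrite !fact_neq0.
Qed.

Hypothesis hfnz : f != 0.

Lemma c00_neq0 : c 0 0 != 0.
Proof.
apply: contra hfnz => /eqP h0; apply/eqP.
rewrite hf big1 // => i _; rewrite big1 // => j hij.
by rewrite -[_ *: c i j]/(C i j) -formula // h0 iter0 iter0 scaler0 mpolyC0 mul0r.
Qed.

Local Notation span := (span_coeffs d c).

Lemma closed_comb (W : KA K n -> Prop) : W 0 -> (forall p q, W p -> W q -> W (p + q)) ->
  (forall (a : K) p, W p -> W (a *: p)) -> (forall i j, (i + j <= d)%N -> W (c i j)) ->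
  forall p, span p -> W p.
Proof.
move=> h0 hD hZ hc p [lam ->].
apply: big_ind => // i _; apply: big_ind => // j hij.
exact/hZ/hc.
Qed.

Lemma span0 : span 0.
Proof. by exists (fun _ _ => 0); rewrite big1 // => i _; rewrite big1 // => j _; rewrite scale0r. Qed.

Lemma spanD p q : span p -> span q -> span (p + q).
Proof.
move=> [l1 ->] [l2 ->]; exists (fun i j => l1 i j + l2 i j).
rewrite -big_split; apply: eq_bigr => i _; rewrite -big_split; apply: eq_bigr => j _.
by rewrite scalerDl.
Qed.

Lemma spanZ (a : K) p : span p -> span (a *: p).
Proof.
move=> [l ->]; exists (fun i j => a * l i j).
rewrite scaler_sumr; apply: eq_bigr => i _; rewrite scaler_sumr; apply: eq_bigr => j _.
by rewrite scalerA.
Qed.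

Lemma span_gen i j : (i + j <= d)%N -> span (c i j).
Proof.
move=> h; exists (fun a b => ((a == i) && (b == j))%:R).
rewrite (eq_bigr (fun a : 'I_d.+1 => \sum_(b < d.+1 | (a + b <= d)%N)
   (if (a == i :> nat) && (b == j :> nat) then c a b else 0))); last first.
  by move=> a _; apply: eq_bigr => b _; case: (_ && _); rewrite ?scale1r ?scale0r.
by rewrite (dsum1 _ (fun a b => c a b)) h.
Qed.

Lemma span_sc (s : K) i j : (i + j <= d)%N \/ s = 0 -> span (s *: c i j).
Proof. by case=> [h|->]; [apply/spanZ/span_gen | rewrite scale0r; apply: span0]. Qed.

Lemma span_op (g : 'I_(NA n) -> KA K n) :
  (forall i j, (i + j <= d)%N -> span (derA g (c i j))) -> forall p, span p -> span (derA g p).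
Proof.
move=> H p [lam ->]; rewrite derA_sum; apply: big_ind; [exact: span0 | exact: spanD|].
move=> i _; rewrite derA_sum; apply: big_ind; [exact: span0 | exact: spanD|].
by move=> j hij; rewrite derAZ; apply/spanZ/H.
Qed.

Lemma span_sub : sl3_submodule span.
Proof.
split; first exact: span0.
split; first exact: spanD.
split; first exact: spanZ.
move=> p hp; split; last split; last split; last split; last split; last split; last split.
- apply: span_op hp => i j h; have := rel_D1 h; rewrite /D1A => ->.
  by apply: span_sc; case: i h => [|i] h; [right; rewrite oppr0 | left; lia].
- apply: span_op hp => i j h; have := rel_D2 h; rewrite /D2A => ->.
  by apply: span_sc; left; lia.
- apply: span_op hp => i j h; have := rel_D3 h; rewrite /D3A => ->.
  by apply: span_sc; left; lia.
- apply: span_op hp => i j h; have := rel_hD1 h; rewrite /hD1A => ->.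
  by apply: span_sc; case: j h => [|j] h; [right; rewrite oppr0 | left; lia].
- apply: span_op hp => i j h; have := rel_hD2 h; rewrite /hD2A => ->.
  apply: span_sc; case: (ltnP (i + j) d) => h'; first by left; lia.
  by right; rewrite (_ : (d - (i + j) = 0)%N) ?oppr0 //; lia.
- apply: span_op hp => i j h; have := rel_hD3 h; rewrite /hD3A => ->.
  apply: span_sc; case: (ltnP (i + j) d) => h'; first by left; lia.
  by right; rewrite (_ : (d - (i + j) = 0)%N) ?oppr0 //; lia.
- apply: span_op hp => i j h; have := rel_E1 h; rewrite /E1A => ->.
  by apply: span_sc; left.
- apply: span_op hp => i j h; have := rel_E2 h; rewrite /E2A => ->.
  by apply: span_sc; left.
Qed.

Section Irr.
Variable W : KA K n -> Prop.
Hypothesis hW : sl3_submodule W.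

Lemma WZ a p : W p -> W (a *: p).
Proof. by case: hW => [_ [_ [h _]]]; apply: h. Qed.
Lemma WD p q : W p -> W q -> W (p + q).
Proof. by case: hW => [_ [h _]]; apply: h. Qed.
Lemma W0 : W 0.
Proof. by case: hW. Qed.
Lemma Wops p : W p -> W (D1A p) /\ W (D2A p) /\ W (D3A p) /\ W (hD1A p) /\
                        W (hD2A p) /\ W (hD3A p) /\ W (E1A p) /\ W (E2A p).
Proof. by case: hW => [_ [_ [_ h]]]; apply: h. Qed.

Lemma W_to_c00 i j : (i + j <= d)%N -> W (c i j) -> W (c 0 0).
Proof.
move=> h hc.
have hi0 : W (c i 0).
  elim: j h hc => [|j IH] h hc; first by [].
  apply: IH; first by lia.
  have e : c i j = (- (j.+1)%:R)^-1 *: D2A (c i j.+1).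
    by rewrite rel_D2 // scalerA mulVf ?scale1r // oppr_eq0 natf_neq0.
  by rewrite e; apply/WZ; case: (Wops hc) => _ [].
have : (i <= d)%N by lia.
elim: i {h hc} hi0 => [|i IH] hc h; first by [].
apply: IH; last by lia.
have e : c i 0 = (- (i.+1)%:R)^-1 *: D3A (c i.+1 0).
  by rewrite rel_D3 ?addn0 // scalerA mulVf ?scale1r // oppr_eq0 natf_neq0.
by rewrite e; apply/WZ; case: (Wops hc) => _ [_ []].
Qed.

Lemma W_from_c00 : W (c 0 0) -> forall i j, (i + j <= d)%N -> W (c i j).
Proof.
move=> h0.
have hi : forall i, (i <= d)%N -> W (c i 0).
  elim=> [|i IH] hi //.
  have e : c i.+1 0 = (- (d - (i + 0))%:R)^-1 *: hD3A (c i 0).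
    rewrite rel_hD3 ?addn0; last by lia.
    by rewrite scalerA mulVf ?scale1r // oppr_eq0 natf_neq0 //; lia.
  rewrite e; apply/WZ; case: (Wops (IH _)) => [|_ [_ [_ [_ [_ []]]]]] //; lia.
move=> i; elim=> [|j IH] h; first by apply: hi; lia.
have e : c i j.+1 = (- (d - (i + j))%:R)^-1 *: hD2A (c i j).
  rewrite rel_hD2; last by lia.
  by rewrite scalerA mulVf ?scale1r // oppr_eq0 natf_neq0 //; lia.
rewrite e; apply/WZ; case: (Wops (IH _)) => [|_ [_ [_ [_ []]]]] //; lia.
Qed.

End Irr.

Definition Sc (lam : nat -> nat -> K) : KA K n :=
  \sum_(i < d.+1) \sum_(j < d.+1 | (i + j <= d)%N) lam i j *: c i j.
Definition supp (lam : nat -> nat -> K) :=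
  [set z : 'I_d.+1 * 'I_d.+1 | (z.1 + z.2 <= d)%N && (lam z.1 z.2 != 0)].

Lemma Sc_zero lam : supp lam = set0 -> Sc lam = 0.
Proof.
move=> hs; rewrite /Sc big1 // => i _; rewrite big1 // => j hij.
have : (i, j) \notin supp lam by rewrite hs inE.
by rewrite inE /= hij /= negbK => /eqP ->; rewrite scale0r.
Qed.

Lemma Sc_single lam (x : 'I_d.+1 * 'I_d.+1) : x \in supp lam ->
  (forall y, y \in supp lam -> y = x) -> Sc lam = lam x.1 x.2 *: c x.1 x.2.
Proof.
move=> hx hy; rewrite /Sc.
rewrite (eq_bigr (fun a : 'I_d.+1 => \sum_(b < d.+1 | (a + b <= d)%N)
   (if (a == x.1 :> nat) && (b == x.2 :> nat) then lam a b *: c a b else 0))); last first.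
  move=> a _; apply: eq_bigr => b hab; case: ifP => // hne.
  case: (boolP ((a, b) \in supp lam)) => [/hy e|].
    by move: hne; rewrite -e /= !eqxx.
  by rewrite inE /= hab /= negbK => /eqP ->; rewrite scale0r.
rewrite (dsum1 _ (fun a b => lam a b *: c a b)).
by move: hx; rewrite inE => /andP [-> _].
Qed.

Lemma Sc_shift (g : 'I_(NA n) -> KA K n) (e : nat -> nat -> K) lam t :
  (forall i j, (i + j <= d)%N -> derA g (c i j) = e i j *: c i j) ->
  Sc (fun i j => lam i j * (e i j - t)) = derA g (Sc lam) - t *: Sc lam.
Proof.
move=> he; rewrite /Sc derA_sum scaler_sumr -sumrB; apply: eq_bigr => i _.
rewrite derA_sum scaler_sumr -sumrB; apply: eq_bigr => j hij.
rewrite derAZ he // !scalerA -scalerBl; congr (_ *: _).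
by rewrite mulrBr [t * _]mulrC.
Qed.

Lemma step (W : KA K n -> Prop) (hW : sl3_submodule W)
  (g : 'I_(NA n) -> KA K n) (e : nat -> nat -> K) lam (x y : 'I_d.+1 * 'I_d.+1) :
  (forall i j, (i + j <= d)%N -> derA g (c i j) = e i j *: c i j) ->
  (forall p, W p -> W (derA g p)) ->
  x \in supp lam -> y \in supp lam -> e x.1 x.2 != e y.1 y.2 ->
  W (Sc lam) -> Sc lam != 0 ->
  exists lam', [/\ (#|supp lam'| < #|supp lam|)%N, W (Sc lam') & Sc lam' != 0].
Proof.
move=> he hWg hx hy hxy hWS hnz.
have gen : forall z : 'I_d.+1 * 'I_d.+1, z \in supp lam ->
    (#|supp (fun i j => (lam i j * (e i j - e z.1 z.2))%R)| < #|supp lam|)%N /\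
    W (Sc (fun i j => lam i j * (e i j - e z.1 z.2))).
  move=> z hz; split; last first.
    by rewrite (@Sc_shift g e lam _ he); apply: WD => //; [exact: hWg | rewrite -scaleNr; exact: WZ].
  rewrite (cardsD1 z (supp lam)) hz add1n ltnS; apply: subset_leq_card.
  apply/subsetP => w; rewrite !inE => /andP [hw]; rewrite mulf_eq0 negb_or => /andP [h1 h2].
  rewrite hw h1 !andbT; apply: contraNneq h2 => ->; by rewrite subrr.
case: (gen x hx) => c1 w1; case: (gen y hy) => c2 w2.
case: (boolP (Sc (fun i j => lam i j * (e i j - e x.1 x.2)) == 0)) => [/eqP h1|]; last first.
  by move=> h; exists (fun i j => lam i j * (e i j - e x.1 x.2)).
case: (boolP (Sc (fun i j => lam i j * (e i j - e y.1 y.2)) == 0)) => [/eqP h2|]; last first.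
  by move=> h; exists (fun i j => lam i j * (e i j - e y.1 y.2)).
have key : (e y.1 y.2 - e x.1 x.2) *: Sc lam =
    Sc (fun i j => lam i j * (e i j - e x.1 x.2)) - Sc (fun i j => lam i j * (e i j - e y.1 y.2)).
  rewrite !(@Sc_shift g e lam _ he).
  by rewrite opprD opprK addrACA subrr add0r scalerBl addrC.
move: key; rewrite h1 h2 subrr => /eqP; rewrite scaler_eq0 subr_eq0 eq_sym (negbTE hxy) /=.
by rewrite (negbTE hnz).
Qed.

Definition e1 (i j : nat) : K := j%:R - i%:R.
Definition e2 (i j : nat) : K := (d - (i + j))%:R - j%:R.

Lemma weights_differ (x y : 'I_d.+1 * 'I_d.+1) :
  (x.1 + x.2 <= d)%N -> (y.1 + y.2 <= d)%N -> x != y ->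
  (e1 x.1 x.2 != e1 y.1 y.2) || (e2 x.1 x.2 != e2 y.1 y.2).
Proof.
case: x y => [x1 x2] [y1 y2] /= hx hy hne.
rewrite -negb_and; apply/negP => /andP [/eqP E1 /eqP E2].
have a : (x2 + y1 = y2 + x1)%N.
  apply: natf_inj; rewrite !natrD; apply/eqP; rewrite -subr_eq0.
  rewrite (_ : _ - _ = (x2%:R - x1%:R) - (y2%:R - y1%:R)); last by ring.
  by move: E1; rewrite /e1 => ->; rewrite subrr.
have b : ((d - (x1 + x2)) + y2 = (d - (y1 + y2)) + x2)%N.
  apply: natf_inj; rewrite !natrD; apply/eqP; rewrite -subr_eq0.
  rewrite (_ : _ - _ = ((d - (x1 + x2))%N%:R - x2%:R) - ((d - (y1 + y2))%N%:R - y2%:R)); last by ring.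
  by move: E2; rewrite /e2 => ->; rewrite subrr.
move/negP: hne; apply; rewrite xpair_eqE; apply/andP; split; apply/eqP/val_inj => /=; lia.
Qed.

Lemma key (W : KA K n -> Prop) (hW : sl3_submodule W) N :
  forall lam, (#|supp lam| <= N)%N -> W (Sc lam) -> Sc lam != 0 -> W (c 0 0).
Proof.
elim: N => [|N IH] lam hc hWS hnz.
  have h0 : supp lam = set0 by apply/eqP; rewrite -cards_eq0 -leqn0.
  by move: hnz; rewrite Sc_zero // eqxx.
case: (eqVneq (supp lam) set0) => [h0 | /set0Pn [x hx]].
  by move: hnz; rewrite Sc_zero // eqxx.
have hx' : (x.1 + x.2 <= d)%N by move: hx; rewrite inE => /andP [].
case: (pickP (fun y => (y \in supp lam) && (y != x))) => [y /andP [hy hyx] | hnone].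
  have hy' : (y.1 + y.2 <= d)%N by move: hy; rewrite inE => /andP [].
  have := weights_differ hx' hy'; rewrite eq_sym hyx => /(_ isT) /orP [] hd.
    have [lam' [c' w' nz']] := @step W hW (@gE1 K n) e1 lam x y
      (fun i j h => rel_E1 h) (fun p hp => proj1 (proj2 (proj2 (proj2 (proj2 (proj2 (proj2 (Wops hW hp))))))))
      hx hy hd hWS hnz.
    by apply: (IH lam') => //; lia.
  have [lam' [c' w' nz']] := @step W hW (@gE2 K n) e2 lam x y
    (fun i j h => rel_E2 h) (fun p hp => proj2 (proj2 (proj2 (proj2 (proj2 (proj2 (proj2 (Wops hW hp))))))))
    hx hy hd hWS hnz.
  by apply: (IH lam') => //; lia.
have hall : forall y, y \in supp lam -> y = x.
  move=> y hy; have := hnone y; rewrite hy /= => /negbT; rewrite negbK => /eqP //.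
have hl : lam x.1 x.2 != 0 by move: hx; rewrite inE => /andP [].
apply: (W_to_c00 hW hx').
have -> : c x.1 x.2 = (lam x.1 x.2)^-1 *: Sc lam.
  by rewrite (Sc_single hx hall) scalerA mulVf ?scale1r.
exact: WZ.
Qed.

Lemma hv : highest_vector (c 0 0) 0 d.
Proof.
split; first exact: c00_neq0.
split; first by rewrite rel_D1 // oppr0 scale0r.
split; first by rewrite rel_D2 // oppr0 scale0r.
split; first by rewrite rel_D3 // oppr0 scale0r.
split; first by rewrite rel_E1 // subrr.
by rewrite rel_E2 // subn0 subr0.
Qed.

Lemma main_res :
  [/\ iso_Gamma (span_coeffs d c) 0 d,
      span_coeffs d c (c 0%N 0%N) /\ highest_vector (c 0%N 0%N) 0 d &
      f = \sum_(i < d.+1) \sum_(j < d.+1 | (i + j <= d)%N)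
        ((((-1) ^+ (i + j) / (i`!%:R * j`!%:R) : K)
            *: iter j (@hD2A K n) (iter i (@hD3A K n) (c 0%N 0%N)))%:MP
          * (u3 K n ^+ (d - (i + j)) * u1 K n ^+ i * u2 K n ^+ j))].
Proof.
split; last first.
- rewrite {1}hf; apply: eq_bigr => i _; apply: eq_bigr => j h.
  by rewrite formula.
- by split; [exact: span_gen | exact: hv].
split; last by exists (c 0 0); split; [exact: span_gen | exact: hv].
split; first exact: span_sub.
split; first by exists (c 0 0); split; [exact: span_gen | exact: c00_neq0].
move=> W hW hsub [p [hWp hp]].
have [lam ep] := hsub p hWp.
have h00 : W (c 0 0).
  apply: (@key W hW #|supp lam| lam (leqnn _)); rewrite /Sc -ep //.
apply: closed_comb; [exact: W0 | exact: WD | exact: WZ | exact: W_from_c00].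
Qed.

End Main.

Unset Implicit Arguments.

Theorem mainTheorem6 (K : fieldType) (n : nat) (d : nat)
    (f : KAu K n) (c : nat -> nat -> KA K n) :
  [pchar K] =i pred0 -> (1 <= n)%N ->
  f = \sum_(i < d.+1) \sum_(j < d.+1 | (i + j <= d)%N)
        (((d`! %/ (i`! * j`! * (d - (i + j))`!))%:R *: c i j)%:MP
          * (u3 K n ^+ (d - (i + j)) * u1 K n ^+ i * u2 K n ^+ j)) ->
  irreducible_contravariant d f ->
  [/\ iso_Gamma (span_coeffs d c) 0 d,
      span_coeffs d c (c 0%N 0%N) /\ highest_vector (c 0%N 0%N) 0 d &
      f = \sum_(i < d.+1) \sum_(j < d.+1 | (i + j <= d)%N)
        ((((-1) ^+ (i + j) / (i`!%:R * j`!%:R) : K)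
            *: iter j (@hD2A K n) (iter i (@hD3A K n) (c 0%N 0%N)))%:MP
          * (u3 K n ^+ (d - (i + j)) * u1 K n ^+ i * u2 K n ^+ j))].
Proof.
move=> hchar _ hf [hcontra [hnz _]].
exact: (main_res hchar hcontra hf hnz).
Qed.
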